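(* Consider the $N$-node uplink system described in the context, let $\beta_1,\dots,\beta_N>0$, define the Lyapunov function $L(t)=\frac1N\sum_{i=1}^N\beta_iD_{t,i}$ and, for a given action $\bm{a}_t=(a_{t,1},\dots,a_{t,N})\in\{0,1\}^N$ with $\sum_i a_{t,i}\le1$, the Lyapunov drift $\Delta=\mathbb{E}[L(t+1)-L(t)\mid \bm{B}_t,\bm{a}_t]$, where $\bm{B}_t$ is the AP's current belief state (the destination AoIs $D_{t,i}$ together with the local-age beliefs $\bm{b}_{t,i}$). Let $G_{t,i}=D_{t,i}-\sum_{d\ge1}b_{t,i}(d)\,d$. Then the drift is minimized over all such actions by scheduling a node $i$ with maximal value of $\beta_ip_iG_{t,i}$.
   Context: System: $N$ nodes $i=1,\dots,N$ and one access point (AP); time slots $t=0,1,2,\dots$. Node $i$ receives a status update in each slot independently with probability $\lambda_i\in(0,1]$ and keeps only the latest one. Local age: $d_{t+1,i}=1$ if an update arrives at node $i$ in slot $t$, else $d_{t+1,i}=d_{t,i}+1$; always $D_{t,i}\ge d_{t,i}$. In each slot the AP schedules at most one node ($a_{t,i}=1$ iff node $i$ is scheduled); a scheduled node $i$'s transmission succeeds with probability $p_i\in(0,1]$ independently. If node $i$ is scheduled and succeeds in slot $t$, the AP observes $d_{t,i}$ and $D_{t+1,i}=d_{t,i}+1$; otherwise the AP observes nothing about $d_{t,i}$ and $D_{t+1,i}=D_{t,i}+1$. The belief $b_{t,i}(d)=\Pr(d_{t,i}=d\mid\text{AP history up to slot }t-1)$, and $D_{t,i}$ is known to the AP. *)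

(* Defs.v *)
From HB Require Import structures.
From mathcomp Require Import all_boot all_order all_algebra.
Set Implicit Arguments. Unset Strict Implicit. Unset Printing Implicit Defensive.
Import Order.TTheory GRing.Theory Num.Theory.
Local Open Scope ring_scope.

Section AoI.
Variables (R : realFieldType) (N : nat).

Definition valid_action (a : {ffun 'I_N -> bool}) : Prop :=
  (\sum_(i < N) (a i : nat) <= 1)%N.

Definition sched (i : 'I_N) : {ffun 'I_N -> bool} := [ffun j => j == i].

(* Belief state B_t: destination AoIs D i (known to the AP) and local-age
   beliefs b i d = Pr(d_{t,i} = d | history); since 1 <= d_{t,i} <= D_{t,i},
   b i is supported on {1,...,D i}. *)
Definition valid_belief (D : 'I_N -> nat) (b : 'I_N -> nat -> R) : Prop :=
  forall i, [/\ (1 <= D i)%N,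
                (forall d, 0 <= b i d),
                (forall d, (d == 0)%N || (D i < d)%N -> b i d = 0)
              & \sum_(1 <= d < (D i).+1) b i d = 1].

Definition succ_prob (p : 'I_N -> R) (a : {ffun 'I_N -> bool}) (i : 'I_N) : R :=
  if a i then p i else 0.

(* E[D_{t+1,i} | B_t, a_t]: average over the success event s (probability
   succ_prob) and the local age d_{t,i} = d (probability b i d); the next
   destination AoI is d + 1 if i is scheduled and succeeds, D i + 1 otherwise. *)
Definition exp_next_D (D : 'I_N -> nat) (b : 'I_N -> nat -> R)
  (p : 'I_N -> R) (a : {ffun 'I_N -> bool}) (i : 'I_N) : R :=
  \sum_(s : bool) \sum_(1 <= d < (D i).+1)
     ((if s then succ_prob p a i else 1 - succ_prob p a i) * b i d *
      (if a i && s then (d.+1)%:R else ((D i).+1)%:R)).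

Definition lyap (beta : 'I_N -> R) (D : 'I_N -> R) : R :=
  N%:R^-1 * \sum_(i < N) beta i * D i.

(* Lyapunov drift E[L(t+1) - L(t) | B_t, a_t] (by linearity of expectation). *)
Definition drift (beta : 'I_N -> R) (D : 'I_N -> nat) (b : 'I_N -> nat -> R)
  (p : 'I_N -> R) (a : {ffun 'I_N -> bool}) : R :=
  lyap beta (exp_next_D D b p a) - lyap beta (fun i => (D i)%:R).

Definition Gval (D : 'I_N -> nat) (b : 'I_N -> nat -> R) (i : 'I_N) : R :=
  (D i)%:R - \sum_(1 <= d < (D i).+1) b i d * d%:R.

End AoI.

(* Main.v *)
Require Import Defs.
From HB Require Import structures.
From mathcomp Require Import all_boot all_order all_algebra.
From mathcomp Require Import ring lra.
Import Order.TTheory GRing.Theory Num.Theory.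
Local Open Scope ring_scope.

Lemma exp_next_eq (R : realFieldType) (N : nat) (D : 'I_N -> nat)
  (b : 'I_N -> nat -> R) (p : 'I_N -> R) (a : {ffun 'I_N -> bool}) (j : 'I_N) :
  \sum_(1 <= d < (D j).+1) b j d = 1 ->
  exp_next_D D b p a j =
  (D j)%:R + 1 - (a j)%:R * (p j * Gval D b j).
Proof.
move=> Hs; rewrite /exp_next_D big_bool /= /succ_prob /Gval.
case: (a j) => /=.
- have -> : \sum_(1 <= d < (D j).+1) (p j * b j d * (d.+1)%:R)
      = p j * (\sum_(1 <= d < (D j).+1) b j d * d%:R)
        + p j * \sum_(1 <= d < (D j).+1) b j d.
    rewrite 2!mulr_sumr -big_split /=; apply: eq_bigr => d _.
    rewrite -addn1 natrD; ring.
  have -> : \sum_(1 <= d < (D j).+1) ((1 - p j) * b j d * (D j).+1%:R)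
      = (1 - p j) * (D j).+1%:R * \sum_(1 <= d < (D j).+1) b j d.
    rewrite mulr_sumr; apply: eq_bigr => d _; ring.
  rewrite Hs -addn1 natrD; ring.
- have -> : \sum_(1 <= d < (D j).+1) (0 * b j d * (D j).+1%:R) = 0.
    by rewrite big1 // => d _; rewrite !mul0r.
  have -> : \sum_(1 <= d < (D j).+1) ((1 - 0) * b j d * (D j).+1%:R)
      = (D j).+1%:R * \sum_(1 <= d < (D j).+1) b j d.
    rewrite mulr_sumr; apply: eq_bigr => d _; ring.
  rewrite Hs -addn1 natrD; ring.
Qed.

Theorem proposition2 (R : realFieldType) (N : nat)
  (lambda p beta : 'I_N -> R) (D : 'I_N -> nat) (b : 'I_N -> nat -> R)
  (Hlambda : forall i, 0 < lambda i <= 1)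
  (Hp : forall i, 0 < p i <= 1)
  (Hbeta : forall i, 0 < beta i)
  (Hb : valid_belief D b)
  (i : 'I_N)
  (Hmax : forall j, beta j * p j * Gval D b j <= beta i * p i * Gval D b i) :
  valid_action (sched i) /\
  forall a : {ffun 'I_N -> bool}, valid_action a ->
    drift beta D b p (sched i) <= drift beta D b p a.
Proof.
have Hsched : valid_action (sched i).
  rewrite /valid_action (bigD1 i) //= big1 ?ffunE ?eqxx // => j /negbTE.
  by rewrite ffunE => ->.
split=> // a Ha.
have driftE : forall a', drift beta D b p a' =
   N%:R^-1 * (\sum_(j < N) beta j
       - \sum_(j < N) (a' j)%:R * (beta j * p j * Gval D b j)).
  move=> a'; rewrite /drift /lyap -mulrBr; congr (_ * _).
  rewrite -sumrB -sumrB; apply: eq_bigr => j _.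
  have [_ _ _ Hs] := Hb j.
  rewrite exp_next_eq //; ring.
rewrite !driftE; apply: ler_wpM2l; first by rewrite invr_ge0 ler0n.
rewrite lerD2l lerN2.
set M := beta i * p i * Gval D b i.
have HG : 0 <= M.
  have [_ Hb0 _ Hs] := Hb i.
  apply: mulr_ge0; first by apply: mulr_ge0; [exact: ltW | case/andP: (Hp i) => /ltW].
  rewrite /Gval subr_ge0.
  apply: (le_trans (y := \sum_(1 <= d < (D i).+1) b i d * (D i)%:R)).
    apply: ler_sum_nat => d /andP [_ Hd]; apply: ler_wpM2l => //.
    by rewrite ler_nat -ltnS.
  by rewrite -mulr_suml Hs mul1r.
have -> : \sum_(j < N) (sched i j)%:R * (beta j * p j * Gval D b j) = M.
  rewrite (bigD1 i) //= big1 ?ffunE ?eqxx ?mul1r ?addr0 // => j /negbTE.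
  by rewrite ffunE => ->; rewrite mul0r.
apply: (le_trans (y := \sum_(j < N) (a j)%:R * M)).
  apply: ler_sum => j _; apply: ler_wpM2l => //.
rewrite -mulr_suml -natr_sum.
apply: (le_trans (y := 1%:R * M)); last by rewrite mul1r.
by apply: ler_wpM2r => //; rewrite ler_nat.
Qed.
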